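(* Let $S=(G,P,\Lambda,I)$ be a completely simple semigroup whose sandwich matrix $P$ is singular (i.e. $P$ has two equal rows or two equal columns). Then $S$ is not an equational domain in the language $\mathcal{L}_S$.
   Context: Rees representation: a completely simple (c.s.) semigroup $S=(G,P,\Lambda,I)$ is given by a group $G$, index sets $\Lambda,I$ (each containing an element $1$), and a matrix $P=(p_{i\lambda})_{i\in I,\lambda\in\Lambda}$ over $G$ normalised so that $p_{1\lambda}=p_{i1}=1_G$; elements are triples $(\lambda,g,i)$ with product $(\lambda,g,i)(\mu,h,j)=(\lambda,gp_{i\mu}h,j)$ and inversion $(\lambda,g,i)^{-1}=(\lambda,p_{i\lambda}^{-1}g^{-1}p_{i\lambda}^{-1},i)$. $P$ is non-singular if it has no two equal rows and no two equal columns. The language $\mathcal{L}_S$ is $\{\cdot,{}^{-1}\}$ together with a constant for each element of $S$; terms are built from variables and constants using products and ${}^{-1}$. An equation is an equality $t(X)=s(X)$ of two terms; a system is any set of equations; its solution set in $S^n$ is the set of points satisfying all of them; a subset of $S^n$ is algebraic if it is the solution set of some system. $S$ is an equational domain (e.d.) in $\mathcal{L}_S$ if every finite union of algebraic sets (in $S^n$, any $n$) is algebraic. *)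

(* Defs.v *)
From mathcomp Require Import all_boot.
Set Implicit Arguments. Unset Strict Implicit. Unset Printing Implicit Defensive.

Record group := Group {
  gcar :> Type;
  gmul : gcar -> gcar -> gcar;
  ginv : gcar -> gcar;
  gone : gcar;
  gmulA : forall x y z, gmul x (gmul y z) = gmul (gmul x y) z;
  gmul1 : forall x, gmul gone x = x;
  gmulr1 : forall x, gmul x gone = x;
  gmulV : forall x, gmul (ginv x) x = gone;
  gmulVr : forall x, gmul x (ginv x) = gone
}.

Definition normalised (G : group) (L I : Type) (l1 : L) (i1 : I)
  (P : I -> L -> G) : Prop :=
  (forall l, P i1 l = gone G) /\ (forall i, P i l1 = gone G).

Definition singular (G : group) (L I : Type) (P : I -> L -> G) : Prop :=
  (exists i j : I, i <> j /\ forall l, P i l = P j l) \/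
  (exists l m : L, l <> m /\ forall i, P i l = P i m).

Definition cs_elt (G : group) (L I : Type) : Type := (L * G * I)%type.

Definition cs_mul (G : group) (L I : Type) (P : I -> L -> G)
  (x y : cs_elt G L I) : cs_elt G L I :=
  let: (l, g, i) := x in let: (m, h, j) := y in
  (l, gmul (gmul g (P i m)) h, j).

Definition cs_inv (G : group) (L I : Type) (P : I -> L -> G)
  (x : cs_elt G L I) : cs_elt G L I :=
  let: (l, g, i) := x in
  (l, gmul (gmul (ginv (P i l)) (ginv g)) (ginv (P i l)), i).

Inductive term (T : Type) (n : nat) : Type :=
| tvar of 'I_n
| tconst of T
| tmul of term T n & term T n
| tinv of term T n.

Fixpoint teval (T : Type) (mul : T -> T -> T) (inv : T -> T) (n : nat)
  (x : 'I_n -> T) (t : term T n) : T :=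
  match t with
  | tvar i => x i
  | tconst c => c
  | tmul t1 t2 => mul (teval mul inv x t1) (teval mul inv x t2)
  | tinv t1 => inv (teval mul inv x t1)
  end.

Definition equation (T : Type) (n : nat) := (term T n * term T n)%type.

Definition algebraic (T : Type) (mul : T -> T -> T) (inv : T -> T) (n : nat)
  (A : ('I_n -> T) -> Prop) : Prop :=
  exists Sys : equation T n -> Prop,
    forall x, A x <-> (forall e, Sys e -> teval mul inv x e.1 = teval mul inv x e.2).

Definition equational_domain (T : Type) (mul : T -> T -> T) (inv : T -> T) : Prop :=
  forall (n k : nat) (A : 'I_k -> ('I_n -> T) -> Prop),
    (forall j, algebraic mul inv (A j)) ->
    algebraic mul inv (fun x => exists j, A j x).

(* Main.v *)
Require Import Defs.
From mathcomp Require Import all_boot.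
From Stdlib Require Import Classical.
Set Implicit Arguments. Unset Strict Implicit.

Definition Rel (G : group) (L I : Type) (P : I -> L -> G) (a b : cs_elt G L I) :=
  a.1.2 = b.1.2 /\ (forall l, P a.2 l = P b.2 l) /\ (forall i, P i a.1.1 = P i b.1.1).

Lemma R_teval (G : group) (L I : Type) (P : I -> L -> G) n (x y : 'I_n -> cs_elt G L I) t :
  (forall v, Rel P (x v) (y v)) ->
  Rel P (teval (cs_mul P) (cs_inv P) x t) (teval (cs_mul P) (cs_inv P) y t).
Proof.
move=> H; elim: t => [v|c|t1 IH1 t2 IH2|t1 IH1] /=; first exact: H.
- by split => //.
- move: IH1 IH2.
  case: (teval _ _ x t1) => [[l g] i]; case: (teval _ _ y t1) => [[l' g'] i'].
  case: (teval _ _ x t2) => [[m h] j]; case: (teval _ _ y t2) => [[m' h'] j'].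
  rewrite /Rel /= => -[e1 [r1 c1]] [e2 [r2 c2]].
  split; first by rewrite e1 e2 r1 c2.
  by split.
- move: IH1.
  case: (teval _ _ x t1) => [[l g] i]; case: (teval _ _ y t1) => [[l' g'] i'].
  rewrite /Rel /= => -[e1 [r1 c1]].
  split; first by rewrite e1 r1 c1.
  by split.
Qed.

Lemma last_form (G : group) (L I : Type) (P : I -> L -> G) n (t : term (cs_elt G L I) n) :
  (exists v, forall x, (teval (cs_mul P) (cs_inv P) x t).2 = (x v).2) \/
  (exists k, forall x, (teval (cs_mul P) (cs_inv P) x t).2 = k).
Proof.
elim: t => [v|c|t1 IH1 t2 IH2|t1 IH1].
- by left; exists v.
- by right; exists c.2.
- case: IH2 => [[v Hv]|[k Hk]]; [left; exists v|right; exists k] => x /=;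
  [rewrite -(Hv x)|rewrite -(Hk x)]; by case: (teval _ _ x t1) => [[? ?] ?]; case: (teval _ _ x t2) => [[? ?] ?].
- case: IH1 => [[v Hv]|[k Hk]]; [left; exists v|right; exists k] => x /=;
  [rewrite -(Hv x)|rewrite -(Hk x)]; by case: (teval _ _ x t1) => [[? ?] ?].
Qed.

Lemma first_form (G : group) (L I : Type) (P : I -> L -> G) n (t : term (cs_elt G L I) n) :
  (exists v, forall x, (teval (cs_mul P) (cs_inv P) x t).1.1 = (x v).1.1) \/
  (exists k, forall x, (teval (cs_mul P) (cs_inv P) x t).1.1 = k).
Proof.
elim: t => [v|c|t1 IH1 t2 IH2|t1 IH1].
- by left; exists v.
- by right; exists c.1.1.
- case: IH1 => [[v Hv]|[k Hk]]; [left; exists v|right; exists k] => x /=;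
  [rewrite -(Hv x)|rewrite -(Hk x)]; by case: (teval _ _ x t1) => [[? ?] ?]; case: (teval _ _ x t2) => [[? ?] ?].
- case: IH1 => [[v Hv]|[k Hk]]; [left; exists v|right; exists k] => x /=;
  [rewrite -(Hv x)|rewrite -(Hk x)]; by case: (teval _ _ x t1) => [[? ?] ?].
Qed.

Definition pt (S : Type) (a b : S) : 'I_2 -> S := fun v => if val v == 0 then a else b.

Definition form (S K : Type) (f : S -> K) (F : ('I_2 -> S) -> K) :=
  (exists v, forall x, F x = f (x v)) \/ (exists k, forall x, F x = k).

Lemma abstract (S K : Type) (f : S -> K) (c c' : S) F1 F2 :
  form f F1 -> form f F2 ->
  F1 (pt c c) = F2 (pt c c) -> F1 (pt c c') = F2 (pt c c') ->
  F1 (pt c' c) = F2 (pt c' c) -> F1 (pt c' c') = F2 (pt c' c').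
Proof.
move=> H1 H2 E1 E2 E3.
case: (classic (f c = f c')) => Hf.
- have HK : forall F, form f F -> F (pt c' c') = F (pt c c).
    move=> F [[v Hv]|[k Hk]]; last by rewrite !Hk.
    by rewrite !Hv; case: v {Hv} => [[|[|?]] ?] /=.
  by rewrite (HK _ H1) (HK _ H2).
- case: H1 => [[v Hv]|[k Hk]]; case: H2 => [[w Hw]|[k' Hk']];
  move: E1 E2 E3; rewrite ?Hv ?Hw ?Hk ?Hk' //.
  + by case: v {Hv} => [[|[|?]] ?]; case: w {Hw} => [[|[|?]] ?] //= _ ? ?; exfalso; apply: Hf.
  + by case: v {Hv} => [[|[|?]] ?] //= <- ? ?; exfalso; apply: Hf.
  + by case: w {Hw} => [[|[|?]] ?] //= -> ? ?; exfalso; apply: Hf.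
Qed.

Lemma triple_eq (G : group) (L I : Type) (a b : cs_elt G L I) :
  a.1.1 = b.1.1 -> a.1.2 = b.1.2 -> a.2 = b.2 -> a = b.
Proof. by case: a => [[? ?] ?]; case: b => [[? ?] ?] /= -> -> ->. Qed.

Lemma generic (G : group) (L I : Type) (P : I -> L -> G) (c c' : cs_elt G L I) :
  Rel P c c' -> c <> c' -> ~ equational_domain (@cs_mul G L I P) (@cs_inv G L I P).
Proof.
move=> Rc Nc ED.
have [|Sys HS] := ED 2 2 (fun j x => x j = c).
  move=> j; exists (fun e => e = (@tvar _ 2 j, @tconst _ 2 c)) => x; split.
  - by move=> H e -> /=.
  - by move=> H; exact: (H _ erefl).
have Hin : forall a b, (a = c \/ b = c) -> forall e, Sys e ->
    teval (cs_mul P) (cs_inv P) (pt a b) e.1 = teval (cs_mul P) (cs_inv P) (pt a b) e.2.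
  move=> a b Hab; apply/HS; case: Hab => ->.
  - by exists ord0.
  - by exists (@Ordinal 2 1 erefl).
have : ~ (exists j : 'I_2, pt c' c' j = c).
  by case => j; rewrite /pt; case: (_ == 0) => E; apply: Nc.
apply; apply/HS => -[t s] Hts /=.
have E1 := Hin c c (or_introl erefl) _ Hts.
have E2 := Hin c c' (or_introl erefl) _ Hts.
have E3 := Hin c' c (or_intror erefl) _ Hts.
simpl in E1, E2, E3.
have Rr : forall u, Rel P (teval (cs_mul P) (cs_inv P) (pt c c) u)
                          (teval (cs_mul P) (cs_inv P) (pt c' c') u).
  by move=> u; apply: R_teval => v; rewrite /pt; case: (_ == 0).
apply: triple_eq.
- apply: (abstract (c := c) (c' := c') (f := fun a : cs_elt G L I => a.1.1)
          (F1 := fun x => (teval (cs_mul P) (cs_inv P) x t).1.1)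
          (F2 := fun x => (teval (cs_mul P) (cs_inv P) x s).1.1)) => /=.
  + exact: first_form.
  + exact: first_form.
  + by rewrite E1.
  + by rewrite E2.
  + by rewrite E3.
- have [<- _] := Rr t; have [<- _] := Rr s; by rewrite E1.
- apply: (abstract (c := c) (c' := c') (f := fun a : cs_elt G L I => a.2)
          (F1 := fun x => (teval (cs_mul P) (cs_inv P) x t).2)
          (F2 := fun x => (teval (cs_mul P) (cs_inv P) x s).2)) => /=.
  + exact: last_form.
  + exact: last_form.
  + by rewrite E1.
  + by rewrite E2.
  + by rewrite E3.
Qed.

Theorem mainTheorem2 (G : group) (L I : Type) (l1 : L) (i1 : I)
  (P : I -> L -> G) (Pnorm : normalised l1 i1 P) (Psing : singular P) :
  ~ equational_domain (@cs_mul G L I P) (@cs_inv G L I P).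
Proof.
case: Psing => [[i [j [Nij H]]]|[l [m [Nlm H]]]].
- apply: (@generic G L I P (l1, gone G, i) (l1, gone G, j)).
  + by split => //; split.
  + by case.
- apply: (@generic G L I P (l, gone G, i1) (m, gone G, i1)).
  + by split => //; split.
  + by case.
Qed.
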